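(* Assume $\Theta_0\ne\emptyset$, fix $T$ and $C_1,\dots,C_T>0$, and consider menu tuples $(\mathcal{F}_1,\dots,\mathcal{F}_T)$ with each $\mathcal{F}_t\subseteq\bar{\mathcal{F}}$ for which best-response strategies exist for every type. Then $$\inf_{Q}\,V(Q;\mathcal{F}_1,\dots,\mathcal{F}_T)\;=\;\sup_{\mathcal{F}'_1,\dots,\mathcal{F}'_T}\ \inf_{Q}\,V(Q;\mathcal{F}'_1,\dots,\mathcal{F}'_T)$$ (infima over all probability distributions $Q$ on $\Theta$, supremum over all such menu tuples) holds if and only if the multi-round contract with menus $\mathcal{F}_1,\dots,\mathcal{F}_T$ is incentive-aligned.
   Context: Let $\Theta=\Theta_0\sqcup\Theta_1$ be a set of types (null and nonnull) and $(P_\theta)_{\theta\in\Theta}$ probability distributions on a measurable space $\mathcal{Z}$. Fix an ambient class $\bar{\mathcal{F}}$ of measurable functions $\mathcal{Z}\to[0,\infty)$. Multi-round profit license game for an agent of type $\theta$: fix $T\ge1$, costs $C_1,\dots,C_T>0$, and menus $\mathcal{F}_1,\dots,\mathcal{F}_T$. Set $L(0)=0$. For $t=1,\dots,T$: the agent chooses a withdrawal $P(t)\in[0,L(t-1)]$ and $I_t\in\{0,1\}$. If $I_t=1$, the agent pays $C_t$, chooses $f_t\in\mathcal{F}_t$, a fresh observation $Z_t\sim P_\theta$ independent of the past is drawn, and $L(t)=(L(t-1)+C_t-P(t))\,f_t(Z_t)$; if $I_t=0$, $L(t)=L(t-1)-P(t)$. An agent strategy specifies $P(t),I_t,f_t$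 as measurable functions of the history $(P(s),I_s,f_s,Z_s)_{s<t}$. Totals: $L=L(T)$, $P=\sum_tP(t)$, $C=\sum_tC_tI_t$; $\mathbb{E}_\theta$ is expectation for type $\theta$. The contract is incentive-aligned if $\mathbb{E}_{\theta_0}[L+P-C]\le0$ for all $\theta_0\in\Theta_0$ and all strategies. Best response: an agent of type $\theta$ uses a strategy maximizing $\mathbb{E}_\theta[L+P-C]$ if this maximum is $>0$; otherwise it opts out, i.e. uses $I_t=0$ for all $t$ (so $L=P=C=0$). The principal's utility $u:\Theta\times[0,\infty)\to\mathbb{R}$ satisfies: for $\theta\in\Theta_1$, $u(\theta,\cdot)$ nondecreasing with $0\le u(\theta,x)\le a_1<\infty$; for $\theta\in\Theta_0$, $u(\theta,\cdot)$ nonincreasing, $u(\theta,0)\le0$, $u(\theta,x)<0$ for $x>0$. The principal receives $u(\theta,L+P)$ if the agent runs at least one stage and $0$ if the agent opts out. $V(Q;\mathcal{F}_1,\dots,\mathcal{F}_T)$ denotes the principal's expected utility when $\theta\sim Q$ and the agent plays a best-response strategy (measurability assumed as needed). *)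

(* Defs.v *)
From HB Require Import structures.
From mathcomp Require Import all_boot all_order all_algebra.
From mathcomp Require Import all_classical all_reals.
From mathcomp Require Import ereal measure measurable_realfun lebesgue_measure lebesgue_integral probability.

Set Implicit Arguments.
Unset Strict Implicit.
Unset Printing Implicit Defensive.

Import Order.TTheory GRing.Theory Num.Theory.
Local Open Scope classical_set_scope.
Local Open Scope ring_scope.

(*  Stages are numbered t = 1..T; the stage being played after a history h   *)
(*  is (size h).+1.  Costs C t and menus F t are indexed by t in 1..T.       *)

Section ProfitLicense.
Variable R : realType.
Variables (dZ : measure_display) (Z : measurableType dZ).

(* An agent's move at one stage: withdrawal P(t), participation I_t, f_t. *)
Record action := Action { wd : R; pl : bool; fn : Z -> R }.

(* A history entry: the move and, if I_t = 1, the observation Z_t. *)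
Definition entry := (action * option Z)%type.
Definition history := seq entry.

Definition strategy := history -> action.

Variable C : nat -> R.

Definition step (t : nat) (L : R) (e : entry) : R :=
  if pl e.1 then
    match e.2 with
    | Some z => (L + C t - wd e.1) * fn e.1 z
    | None => L + C t - wd e.1 (* never occurs on consistent histories *)
    end
  else L - wd e.1.

Fixpoint ledger_from (t : nat) (L : R) (h : history) : R :=
  match h with
  | [::] => L
  | e :: h' => ledger_from t.+1 (step t L e) h'
  end.

Definition ledger (h : history) : R := ledger_from 1 0 h.

Definition withdrawn (h : history) : R := \sum_(e <- h) wd e.1.

Fixpoint cost_from (t : nat) (h : history) : R :=
  match h with
  | [::] => 0
  | e :: h' => (if pl e.1 then C t else 0) + cost_from t.+1 h'
  end.

Definition cost (h : history) : R := cost_from 1 h.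

Definition played (h : history) : bool := has (fun e => pl e.1) h.

Inductive reach (s : strategy) : history -> Prop :=
| reach0 : reach s [::]
| reachS h o : reach s h ->
    match o with Some _ => pl (s h) = true | None => pl (s h) = false end ->
    reach s (rcons h (s h, o)).

Variable T : nat.
Variable F : nat -> set (Z -> R).

Definition feasible (s : strategy) (h : history) : Prop :=
  0 <= wd (s h) <= ledger h /\ (pl (s h) -> F (size h).+1 (fn (s h))).

Definition valid (s : strategy) : Prop :=
  forall h, reach s h -> (size h < T)%N -> feasible s h.

Variable P : probability Z R.

(* Expectation of a function of the final history, for the process in which
   at each stage with I_t = 1 a fresh observation Z_t ~ P is drawn
   independently of the past: an iterated integral over the stages.
   [expect s Phi n h] is the conditional expectation given the history h
   with n stages remaining. *)
Fixpoint expect (s : strategy) (Phi : history -> \bar R) (n : nat)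
    (h : history) : \bar R :=
  match n with
  | 0 => Phi h
  | n'.+1 =>
      if pl (s h) then (\int[P]_z expect s Phi n' (rcons h (s h, Some z)))%E
      else expect s Phi n' (rcons h (s h, None))
  end.

Definition Exp (s : strategy) (Phi : history -> \bar R) : \bar R :=
  expect s Phi T [::].

(* Measurability (assumed "as needed"): the conditional expectations that are
   integrated at each stage are measurable functions of the new observation. *)
Definition regular_for (s : strategy) (Phi : history -> \bar R) : Prop :=
  forall n h, reach s h -> (size h + n.+1)%N = T -> pl (s h) ->
    measurable_fun [set: Z] (fun z : Z => expect s Phi n (rcons h (s h, Some z))).

Definition Phi_LP (h : history) : \bar R := (ledger h + withdrawn h)%:E.
Definition Phi_C (h : history) : \bar R := (cost h)%:E.

(* E[L + P - C], computed as E[L + P] - E[C] (L + P >= 0, C bounded). *)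
Definition agent_value (s : strategy) : \bar R :=
  (Exp s Phi_LP - Exp s Phi_C)%E.

End ProfitLicense.

Arguments reach {R dZ Z}.

Section Contract.
Variable R : realType.
Variables (dZ : measure_display) (Z : measurableType dZ).
Variables (dT : measure_display) (Theta : measurableType dT).
Variable Ptheta : Theta -> probability Z R.
Variable Theta0 : set Theta.
Variable u : Theta -> R -> R.
Variable T : nat.
Variable C : nat -> R.

Definition strats (F : nat -> set (Z -> R)) : set (strategy R Z) :=
  [set s | valid C T F s /\
     forall th, regular_for T (Ptheta th) s (Phi_LP C) /\
                regular_for T (Ptheta th) s (Phi_C C)].

Definition avalue (th : Theta) (s : strategy R Z) : \bar R :=
  agent_value C T (Ptheta th) s.

Definition incentive_aligned (F : nat -> set (Z -> R)) : Prop :=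
  forall th0, Theta0 th0 -> forall s, strats F s -> (avalue th0 s <= 0)%E.

Definition opts_out (s : strategy R Z) : Prop :=
  forall h, reach s h -> (size h < T)%N -> pl (s h) = false.

Definition best_responses_exist (F : nat -> set (Z -> R)) : Prop :=
  forall th, exists s, strats F s /\
    forall s', strats F s' -> (avalue th s' <= avalue th s)%E.

Definition best_response (F : nat -> set (Z -> R)) (th : Theta)
    (s : strategy R Z) : Prop :=
  strats F s /\
  ((exists s', strats F s' /\ (0 < avalue th s')%E) ->
     forall s', strats F s' -> (avalue th s' <= avalue th s)%E) /\
  (~ (exists s', strats F s' /\ (0 < avalue th s')%E) -> opts_out s).

Definition Phi_U (th : Theta) (h : history R Z) : \bar R :=
  if played h then (u th (ledger C h + withdrawn h))%:E else 0%E.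

Definition principal_utility (th : Theta) (s : strategy R Z) : \bar R :=
  Exp T (Ptheta th) s (Phi_U th).

(* Menu tuple F with a best-response profile beta (one best response per
   type), satisfying the standing assumptions: F_t subset of Fbar,
   best responses exist, and measurability as needed. *)
Definition admissible (Fbar : set (Z -> R)) (F : nat -> set (Z -> R))
    (beta : Theta -> strategy R Z) : Prop :=
  (forall t, (1 <= t <= T)%N -> F t `<=` Fbar) /\
  best_responses_exist F /\
  (forall th, best_response F th (beta th)) /\
  (forall th, regular_for T (Ptheta th) (beta th) (Phi_U th)) /\
  measurable_fun setT (fun th => principal_utility th (beta th)).

(* V(Q; F_1..F_T) when the types play the best-response profile beta. *)
Definition V (Q : probability Theta R) (beta : Theta -> strategy R Z) : \bar R :=
  (\int[Q]_th principal_utility th (beta th))%E.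

Definition infV (beta : Theta -> strategy R Z) : \bar R :=
  ereal_inf (range (fun Q : probability Theta R => V Q beta)).

End Contract.

(* Main.v *)
Require Import Defs.
From HB Require Import structures.
From mathcomp Require Import all_boot all_order all_algebra.
From mathcomp Require Import all_classical all_reals.
From mathcomp Require Import ereal measure measurable_realfun lebesgue_measure lebesgue_integral probability.
Import Order.TTheory GRing.Theory Num.Theory.
Local Open Scope classical_set_scope.
Local Open Scope ring_scope.
Local Open Scope ring_scope.
Section AuxS.
Local Open Scope ereal_scope.

Lemma int_le0 (R : realType) d (T : measurableType d) (mu : measure T R) (f : T -> \bar R) :
  (forall x, f x <= 0) -> \int[mu]_x f x = - \int[mu]_x (- f x).
Proof.
move=> hf; rewrite integralN ?oppeK //.
rewrite (@integral0_eq _ _ _ _ _ (numfun.funepos.body f)) ?fin_num_adde_defr //.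
by move=> x _; rewrite (numfun.le0_funeposE (D:=setT)) ?inE // => y _; exact: hf.
Qed.

Lemma int_neg (R : realType) d (T : measurableType d) (mu : measure T R) (f g : T -> \bar R) :
  measurable_fun setT f -> measurable_fun setT g ->
  (forall x, f x <= 0) -> (forall x, 0 <= g x) -> (forall x, 0 < g x -> f x < 0) ->
  0 < \int[mu]_x g x -> \int[mu]_x f x < 0.
Proof.
move=> mf mg hf hg hfg hint.
rewrite int_le0 // oppe_lt0 lt_neqAle integral_ge0 ?andbT; last by move=> x _; rewrite oppe_ge0.
apply/negP => /eqP /esym H0.
have H1 : \int[mu]_x `|- f x| = 0.
  rewrite -H0; apply: eq_integral => x _; rewrite gee0_abs // oppe_ge0 //.
have := (ae_eq_integral_abs mu measurableT (measurableT_comp (@oppe_measurable _ setT) mf)).1 H1.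
move=> hae.
have : \int[mu]_x g x = \int[mu]_x (cst 0 x).
  apply: ae_eq_integral => //; try exact: measurable_cst.
  apply: filterS hae => x /= h1 h2; have {}h1 := h1 h2.
  apply/eqP; rewrite eq_le hg andbT leNgt; apply/negP => /hfg.
  by rewrite -oppe_gt0 h1 ltxx.
by rewrite integral0 => hh; move: hint; rewrite hh ltxx.
Qed.
End AuxS.

Section Hist.
Variables (R : realType) (dZ : measure_display) (Z : measurableType dZ).
Variable C : nat -> R.

Lemma ledger_from_rcons t L (h : history R Z) e :
  ledger_from C t L (rcons h e) = step C (t + size h) (ledger_from C t L h) e.
Proof.
elim: h t L => [|e' h IH] t L /=; first by rewrite addn0.
by rewrite IH addSnnS.
Qed.

Lemma ledger_rcons (h : history R Z) e :
  ledger C (rcons h e) = step C (size h).+1 (ledger C h) e.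
Proof. by rewrite /ledger ledger_from_rcons add1n. Qed.

Lemma withdrawn_rcons (h : history R Z) e :
  withdrawn (rcons h e) = withdrawn h + wd e.1.
Proof. by rewrite /withdrawn big_rcons. Qed.

Lemma played_rcons (h : history R Z) e :
  played (rcons h e) = played h || pl e.1.
Proof. by rewrite /played has_rcons orbC. Qed.

Lemma cost_from_ge0 T (hC : forall t, (1 <= t <= T)%N -> 0 < C t) (h : history R Z) t :
  (1 <= t)%N -> (t + size h <= T.+1)%N -> 0 <= cost_from C t h.
Proof.
elim: h t => [|e h IH] t //= h1 h2.
apply: addr_ge0; last by apply: IH => //; rewrite addSnnS.
case: (pl e.1) => //; apply/ltW/hC; rewrite h1 /=.
by move: h2; rewrite addnS ltnS => /(leq_trans _); apply; rewrite leq_addr.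
Qed.

Lemma cost_from_unplayed (h : history R Z) t :
  ~~ played h -> cost_from C t h = 0.
Proof.
elim: h t => [|e h IH] t //=; rewrite /played /= negb_or => /andP [/negbTE -> hh].
by rewrite add0r IH.
Qed.
End Hist.
Section Inv.
Variables (R : realType) (dZ : measure_display) (Z : measurableType dZ).
Variables (C : nat -> R) (T : nat) (F : nat -> set (Z -> R)) (Fbar : set (Z -> R)).
Hypothesis hFbar : forall f, Fbar f -> forall z, 0 <= f z.
Hypothesis hFsub : forall t, (1 <= t <= T)%N -> F t `<=` Fbar.
Hypothesis hC : forall t, (1 <= t <= T)%N -> 0 < C t.
Variable s : strategy R Z.
Hypothesis hs : valid C T F s.

Lemma inv_reach h : reach s h -> (size h <= T)%N ->
  0 <= ledger C h /\ 0 <= withdrawn h /\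
  (~~ played h -> ledger C h = 0 /\ withdrawn h = 0).
Proof.
elim=> [|{}h o hr IH ho]; first by rewrite /ledger /withdrawn big_nil.
rewrite size_rcons => hsz.
have [IH1 [IH2 IH3]] := IH (ltnW hsz).
have [/andP [w0 wL] hF] := hs _ hr hsz.
rewrite ledger_rcons withdrawn_rcons played_rcons /step /=.
case: o ho => [z|] /= ho.
- rewrite ho /= orbT; split; last by split=> //; exact: addr_ge0 IH2 w0.
  apply: mulr_ge0.
  + rewrite subr_ge0 (le_trans wL) // lerDl ltW //.
    by apply: hC; rewrite ltnS hsz.
  + have hb : (1 <= (size h).+1 <= T)%N by rewrite ltnS hsz.
    exact: (@hFbar (fn (s h)) (hFsub _ hb _ (hF ho))).
- rewrite ho /= orbF; split; first by rewrite subr_ge0.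
  split; first exact: addr_ge0 IH2 w0.
  move=> /IH3 [hL hW]; rewrite hL hW in wL *.
  have -> : wd (s h) = 0 by apply/eqP; rewrite eq_le w0 wL.
  by rewrite subr0 addr0.
Qed.
End Inv.
Section Expect.
Variables (R : realType) (dZ : measure_display) (Z : measurableType dZ).
Variables (P : probability Z R) (s : strategy R Z).
Local Open Scope ereal_scope.

Lemma reach_step h z : reach s h -> pl (s h) -> reach s (rcons h (s h, Some z)).
Proof. by move=> hr hp; apply: reachS. Qed.
Lemma reach_stepN h : reach s h -> ~~ pl (s h) -> reach s (rcons h (s h, None)).
Proof. by move=> hr /negbTE hp; apply: reachS. Qed.

Lemma expect_ge0 (Phi : history R Z -> \bar R) n h : reach s h ->
  (forall h', reach s h' -> size h' = (size h + n)%N -> 0 <= Phi h') ->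
  0 <= expect P s Phi n h.
Proof.
elim: n h => [|n IH] h hr hP /=; first by apply: hP; rewrite ?addn0.
case: ifPn => hp.
- apply: integral_ge0 => z _; apply: IH; first exact: reach_step.
  by move=> h' hr' hs; apply: hP => //; rewrite hs size_rcons addSnnS.
- apply: IH; first exact: reach_stepN.
  by move=> h' hr' hs; apply: hP => //; rewrite hs size_rcons addSnnS.
Qed.

Lemma expect_le0 (Phi : history R Z -> \bar R) n h : reach s h ->
  (forall h', reach s h' -> size h' = (size h + n)%N -> Phi h' <= 0) ->
  expect P s Phi n h <= 0.
Proof.
elim: n h => [|n IH] h hr hP /=; first by apply: hP; rewrite ?addn0.
case: ifPn => hp.
- rewrite int_le0; last first.
    move=> z; apply: IH; first exact: reach_step.
    by move=> h' hr' hs; apply: hP => //; rewrite hs size_rcons addSnnS.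
  rewrite oppe_le0; apply: integral_ge0 => z _; rewrite oppe_ge0; apply: IH; first exact: reach_step.
  by move=> h' hr' hs; apply: hP => //; rewrite hs size_rcons addSnnS.
- apply: IH; first exact: reach_stepN.
  by move=> h' hr' hs; apply: hP => //; rewrite hs size_rcons addSnnS.
Qed.

Lemma expect_eq0 (Phi : history R Z -> \bar R) n h : reach s h ->
  (forall h', reach s h' -> size h' = (size h + n)%N -> Phi h' = 0) ->
  expect P s Phi n h = 0.
Proof.
move=> hr hP; apply/eqP; rewrite eq_le expect_le0 ?expect_ge0 // => h' hr' hs;
  by rewrite hP.
Qed.

Lemma expect_neg (Phi1 Phi2 : history R Z -> \bar R) T :
  regular_for T P s Phi1 -> regular_for T P s Phi2 ->
  (forall h', reach s h' -> size h' = T -> 0 <= Phi1 h') ->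
  (forall h', reach s h' -> size h' = T -> Phi2 h' <= 0) ->
  (forall h', reach s h' -> size h' = T -> 0 < Phi1 h' -> Phi2 h' < 0) ->
  forall n h, reach s h -> (size h + n)%N = T ->
  0 < expect P s Phi1 n h -> expect P s Phi2 n h < 0.
Proof.
move=> r1 r2 h1 h2 h12; elim=> [|n IH] h hr hs /=.
  by apply: h12 => //; rewrite -hs addn0.
case: ifPn => hp.
- apply: int_neg.
  + exact: r2.
  + exact: r1.
  + move=> z; apply: expect_le0; first exact: reach_step.
    by move=> h' hr' hs'; apply: h2 => //; rewrite hs' size_rcons -hs addSnnS.
  + move=> z; apply: expect_ge0; first exact: reach_step.
    by move=> h' hr' hs'; apply: h1 => //; rewrite hs' size_rcons -hs addSnnS.
  + move=> z; apply: IH; first exact: reach_step.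
    by rewrite size_rcons -hs addSnnS.
- apply: IH; first exact: reach_stepN.
  by rewrite size_rcons -hs addSnnS.
Qed.
End Expect.
Section More.
Variables (R : realType) (dZ : measure_display) (Z : measurableType dZ).
Variable C : nat -> R.

Lemma unplayed_of (s : strategy R Z) T :
  (forall h, reach s h -> (size h < T)%N -> pl (s h) = false) ->
  forall h, reach s h -> (size h <= T)%N -> ~~ played h.
Proof.
move=> hs h; elim=> [|{}h o hr IH ho] //.
rewrite size_rcons played_rcons /= => hsz.
by rewrite hs // orbF IH // ltnW.
Qed.

Definition s0 : strategy R Z := fun _ => Action 0 false (fun _ => 0).

Lemma s0_ledger h : reach s0 h -> ledger C h = 0.
Proof.
elim=> [|{}h o hr IH ho] //.
by rewrite ledger_rcons /step /= IH subr0.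
Qed.
End More.

Theorem theoremB2 (R : realType)
  (dZ : measure_display) (Z : measurableType dZ)
  (dT : measure_display) (Theta : measurableType dT)
  (Ptheta : Theta -> probability Z R)
  (Theta0 : set Theta)
  (Fbar : set (Z -> R))
  (hFbar : forall f, Fbar f -> measurable_fun setT f /\ forall z, 0 <= f z)
  (u : Theta -> R -> R) (a1 : R)
  (hu1 : forall th, ~ Theta0 th ->
     (forall x y, 0 <= x -> x <= y -> u th x <= u th y) /\
     (forall x, 0 <= x -> 0 <= u th x <= a1))
  (hu0 : forall th, Theta0 th ->
     (forall x y, 0 <= x -> x <= y -> u th y <= u th x) /\
     u th 0 <= 0 /\ (forall x, 0 < x -> u th x < 0))
  (hTheta0 : Theta0 !=set0)
  (T : nat) (hT : (1 <= T)%N)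
  (C : nat -> R) (hC : forall t, (1 <= t <= T)%N -> 0 < C t)
  (F : nat -> set (Z -> R)) (beta : Theta -> strategy R Z)
  (hF : admissible Ptheta u T C Fbar F beta) :
  infV Ptheta u T C beta =
    ereal_sup [set infV Ptheta u T C beta' | beta' in
       [set b | exists F', admissible Ptheta u T C Fbar F' b]]
  <-> incentive_aligned Ptheta Theta0 T C F.
Proof.
have hFb : forall f, Fbar f -> forall z, 0 <= f z by move=> f /hFbar [].
have [th0 hth0] := hTheta0.
have inv : forall F' s, (forall t, (1 <= t <= T)%N -> F' t `<=` Fbar) ->
    strats Ptheta T C F' s -> forall h, reach s h -> size h = T ->
    [/\ 0 <= ledger C h, 0 <= withdrawn h &
     (~~ played h -> ledger C h = 0 /\ withdrawn h = 0)].
  move=> F' s hsub [hv _] h hr hs.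
  have [a [b c]] := @inv_reach _ _ _ C T F' Fbar hFb hsub hC s hv h hr (eq_leq hs).
  by split.
have lemA : forall F' b, admissible Ptheta u T C Fbar F' b ->
    forall th, Theta0 th -> (principal_utility Ptheta u T C th (b th) <= 0)%E.
  move=> F' b [hsub [_ [hbr _]]] th hth.
  apply: expect_le0; first exact: reach0.
  move=> h hr hs; have [h1 h2 _] := inv F' _ hsub (hbr th).1 h hr hs.
  rewrite /Phi_U; case: ifP => _ //; rewrite lee_fin.
  have [hmon [hu00 _]] := hu0 th hth.
  exact: le_trans (hmon 0 _ (lexx _) (addr_ge0 h1 h2)) hu00.
have lemB : forall F' b, admissible Ptheta u T C Fbar F' b ->
    forall th, (infV Ptheta u T C b <= principal_utility Ptheta u T C th (b th))%E.
  move=> F' b [_ [_ [_ [_ hm]]]] th.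
  apply: ereal_inf_lbound; exists (\d_th : probability Theta R) => //.
  by rewrite /V integral_dirac // diracT mul1e.
pose F0 : nat -> set (Z -> R) := fun _ => set0.
pose beta0 : Theta -> strategy R Z := fun _ => (@s0 R _ Z).
have s0_unpl : forall h, reach ((@s0 R _ Z)) h -> (size h <= T)%N -> ~~ played h.
  by apply: unplayed_of.
have F0_unpl : forall s, valid C T F0 s ->
    forall h, reach s h -> (size h <= T)%N -> ~~ played h.
  move=> s hv; apply: unplayed_of => h hr hs.
  by apply/negbTE/negP => hp; have [_ /(_ hp)] := hv h hr hs.
have F0sub : forall t, (1 <= t <= T)%N -> F0 t `<=` Fbar by move=> t _; exact: sub0set.
have s0_strats : strats Ptheta T C F0 ((@s0 R _ Z)).
  split; last by move=> th; split => n h _ _.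
  move=> h hr _; split => //=; have := (@s0_ledger _ _ _ C h hr) => hl; apply/andP; split => //; by rewrite hl.
have F0_val : forall th s, strats Ptheta T C F0 s -> avalue Ptheta T C th s = 0%E.
  move=> th s hs; rewrite /avalue /agent_value /Exp.
  rewrite !expect_eq0 ?sube0 //; try exact: reach0.
  - move=> h hr hsz; rewrite /Phi_C /cost cost_from_unplayed //.
    by apply: (F0_unpl s hs.1 h hr); rewrite hsz.
  - move=> h hr hsz; have [_ _ h3] := inv F0 s F0sub hs h hr hsz.
    rewrite /Phi_LP; have [-> ->] := h3 (F0_unpl s hs.1 h hr (eq_leq hsz)).
    by rewrite addr0.
have pu0 : forall th, principal_utility Ptheta u T C th (beta0 th) = 0%E.
  move=> th; apply: expect_eq0; first exact: reach0.
  move=> h hr hsz; rewrite /Phi_U ifN //; by apply: s0_unpl => //; rewrite hsz.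
have adm0 : admissible Ptheta u T C Fbar F0 beta0.
  split; first exact: F0sub.
  split; first by move=> th1; exists ((@s0 R _ Z)); split => // s1 hs1; rewrite !F0_val.
  split.
    move=> th; split => //; split.
      by move=> _ s' hs'; rewrite !F0_val.
    by move=> _ h hr hs.
  split; first by move=> th n h _ _.
  rewrite (_ : (fun th => _) = cst 0%E); first exact: measurable_cst.
  by apply: funext => th; rewrite pu0.
have inf0 : (0 <= infV Ptheta u T C beta0)%E.
  apply: le_ereal_inf_tmp => _ [Q _ <-]; rewrite /V.
  by apply: integral_ge0 => th _; rewrite pu0.
have sup0 : ereal_sup [set infV Ptheta u T C beta' | beta' in
       [set b | exists F', admissible Ptheta u T C Fbar F' b]] = 0%E.
  apply/eqP; rewrite eq_le; apply/andP; split.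
    apply: ge_ereal_sup => _ [b [F' hb] <-].
    exact: le_trans (lemB F' b hb th0) (lemA F' b hb th0 hth0).
  apply: le_trans inf0 _; apply: ereal_sup_ubound; exists beta0 => //.
  by exists F0.
rewrite sup0.
have [hFsub [_ [hbr [hregU _]]]] := hF.
have Expc : forall th s, strats Ptheta T C F s ->
    (0 <= Exp T (Ptheta th) s (Phi_C C))%E.
  move=> th s hs; apply: expect_ge0; first exact: reach0.
  move=> h _ hsz; rewrite /Phi_C lee_fin /cost; apply: (@cost_from_ge0 _ _ _ C T hC) => //.
  by rewrite hsz /= add0n add1n.
split.
- move=> hinf th hth s hs; rewrite leNgt; apply/negP => hpos.
  have [hbs [hmax _]] := hbr th.
  have hv : (0 < avalue Ptheta T C th (beta th))%E.
    exact: lt_le_trans hpos (hmax (ex_intro _ s (conj hs hpos)) s hs).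
  have hLP : (0 < Exp T (Ptheta th) (beta th) (Phi_LP C))%E.
    rewrite ltNge; apply/negP => hle; move: hv; rewrite /avalue /agent_value.
    apply/negP; rewrite -leNgt -(adde0 0%E); apply: leeD => //.
    by rewrite oppe_le0; exact: Expc.
  have hneg : (principal_utility Ptheta u T C th (beta th) < 0)%E.
    apply: (@expect_neg _ _ _ _ _ _ _ T) hLP.
    + exact: ((hbs.2 th).1).
    + exact: hregU.
    + move=> h hr hsz; have [h1 h2 _] := inv F _ hFsub hbs h hr hsz.
      by rewrite /Phi_LP lee_fin addr_ge0.
    + move=> h hr hsz; have [h1 h2 _] := inv F _ hFsub hbs h hr hsz.
      rewrite /Phi_U; case: ifP => _ //; rewrite lee_fin.
      have [hmon [hu00 _]] := hu0 th hth.
      exact: le_trans (hmon 0 _ (lexx _) (addr_ge0 h1 h2)) hu00.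
    + move=> h hr hsz; have [h1 h2 h3] := inv F _ hFsub hbs h hr hsz.
      rewrite /Phi_LP /Phi_U lte_fin => hp; case: ifPn => hpl.
        by rewrite lte_fin; apply: (hu0 th hth).2.2.
      by have [hl hw] := h3 hpl; move: hp; rewrite hl hw addr0 ltxx.
    + exact: reach0.
    + by [].
  have := lemB F beta hF th; rewrite hinf => /le_lt_trans /(_ hneg).
  by rewrite ltxx.
- move=> hIA; apply/eqP; rewrite eq_le; apply/andP; split.
    exact: le_trans (lemB F beta hF th0) (lemA F beta hF th0 hth0).
  apply: le_ereal_inf_tmp => _ [Q _ <-]; rewrite /V.
  apply: integral_ge0 => th _.
  have [hbs [_ hopt]] := hbr th.
  have [hth|hth] := pselect (Theta0 th).
    rewrite le_eqVlt; apply/orP; left; apply/eqP/esym.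
    apply: expect_eq0; first exact: reach0.
    move=> h hr hsz; rewrite /Phi_U ifN //.
    apply: (@unplayed_of _ _ _ (beta th) T _ h hr); last by rewrite hsz.
    apply: hopt => -[s' [hs' hp]].
    by move: (hIA th hth s' hs'); rewrite leNgt hp.
  apply: expect_ge0; first exact: reach0.
  move=> h hr hsz; have [h1 h2 _] := inv F _ hFsub hbs h hr hsz.
  rewrite /Phi_U; case: ifP => _ //; rewrite lee_fin.
  by have /andP [] := (hu1 th hth).2 _ (addr_ge0 h1 h2).
Qed.
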